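(* Let $R$ be a ring, $n\in\mathbb{Z}$, $N$ a complex of left $R$-modules and $M$ a left $R$-module. Then $N\in\underline{\mathfrak{Pr}}^{-1}_{\mathscr{C}(R)}(\overline{M}[n])$ if and only if $N_{n+1}\in\underline{\mathfrak{Pr}}^{-1}_{R\text{-Mod}}(M)$.
   Context: Complexes are homologically indexed. For a module $M$, $\overline{M}$ is the complex with $M$ in degrees $1$ and $0$, the identity of $M$ as differential $1\to0$, and $0$ elsewhere; for a complex $X$, $X[n]$ has $X[n]_i=X_{i-n}$ and differential $(-1)^nd^X_{i-n}$. For objects $M,N$ of an abelian category $\mathscr{A}$ with enough projectives ($R\text{-Mod}$ or the category $\mathscr{C}(R)$ of complexes), $M$ is $N$-subprojective if every morphism $M\to N$ factors through a projective object of $\mathscr{A}$; $\underline{\mathfrak{Pr}}^{-1}_{\mathscr{A}}(M)$ is the class of all $N$ such that $M$ is $N$-subprojective. *)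

(* Defs.v *)
From HB Require Import structures.
From mathcomp Require Import all_boot all_order all_algebra.
Unset Printing Implicit Defensive.
Import Order.TTheory GRing.Theory Num.Theory.
Local Open Scope ring_scope.

Section Defs.
Variable R : pzRingType.

(* projective object of R-Mod: lifting property against epimorphisms
   (= surjective R-linear maps) *)
Definition projective_mod (P : lmodType R) : Prop :=
  forall (A B : lmodType R) (g : A -> B), linear g ->
    (forall y, exists x, g x = y) ->
  forall f : P -> B, linear f ->
    exists h : P -> A, linear h /\ forall x, g (h x) = f x.

Definition subproj_mod (M N : lmodType R) : Prop :=
  forall f : M -> N, linear f ->
    exists (P : lmodType R) (a : M -> P) (b : P -> N),
      [/\ projective_mod P, linear a, linear b & forall x, b (a x) = f x].

Record complex := Complex {
  cobj :> int -> lmodType R;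
  cdiff : forall i : int, cobj i -> cobj (i - 1);
  cdiff_linear : forall i : int, linear (cdiff i);
  cdiff2 : forall i x, cdiff (i - 1) (cdiff i x) = 0 }.

Definition chain_map (X Y : complex) (f : forall i, X i -> Y i) : Prop :=
  (forall i, linear (f i)) /\
  (forall i x, f (i - 1) (cdiff X i x) = cdiff Y i (f i x)).
Arguments chain_map {X Y} f.

(* projective object of C(R): lifting property against epimorphisms of
   C(R) (= degreewise surjective chain maps) *)
Definition projective_cx (P : complex) : Prop :=
  forall (A B : complex) (g : forall i, A i -> B i), chain_map g ->
    (forall i y, exists x, g i x = y) ->
  forall f : forall i, P i -> B i, chain_map f ->
    exists h : forall i, P i -> A i, chain_map h /\
      forall i x, g i (h i x) = f i x.

Definition subproj_cx (X Y : complex) : Prop :=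
  forall f : forall i, X i -> Y i, chain_map f ->
    exists (P : complex) (a : forall i, X i -> P i) (b : forall i, P i -> Y i),
      [/\ projective_cx P, chain_map a, chain_map b &
          forall i x, b i (a i x) = f i x].

Definition zero_mod : lmodType R := 'rV[R]_0.

Section Bar.
Variables (M : lmodType R) (n : int).

(* \overline{M}[n] : M in degrees n+1 and n, 0 elsewhere *)
Definition bar_obj (i : int) : lmodType R :=
  if (i == n + 1) || (i == n) then M else zero_mod.

Lemma bar_obj_top i : i == n + 1 -> bar_obj i = M.
Proof. by move=> h; rewrite /bar_obj h. Qed.

Lemma bar_obj_bot i : i == n + 1 -> bar_obj (i - 1) = M.
Proof.
by move/eqP=> ->; rewrite /bar_obj addrK eqxx orbT.
Qed.

Definition lcast (A B : lmodType R) (e : A = B) (x : A) : B :=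
  ecast X (X : lmodType R) e x.
Arguments lcast {A B} e x.

Definition bar_diff (i : int) : bar_obj i -> bar_obj (i - 1) :=
  (if i == n + 1 as b return (i == n + 1) = b -> bar_obj i -> bar_obj (i - 1)
   then fun h x =>
     lcast (esym (bar_obj_bot i h))
       (((-1) ^+ `|n|%N : R) *: lcast (bar_obj_top i h) x)
   else fun _ _ => 0) (erefl _).
Arguments bar_diff {i} x.

Lemma lcast_linear (A B : lmodType R) (e : A = B) : linear (lcast e).
Proof. by case: B / e. Qed.

Lemma lcastD (A B : lmodType R) (e : A = B) x y :
  lcast e (x + y) = lcast e x + lcast e y.
Proof. by case: B / e. Qed.

Lemma lcastZ (A B : lmodType R) (e : A = B) a x :
  lcast e (a *: x) = a *: lcast e x.
Proof. by case: B / e. Qed.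

Lemma scale_sign_comm (V : lmodType R) k a (x : V) :
  ((-1) ^+ k : R) *: (a *: x) = a *: (((-1) ^+ k : R) *: x).
Proof.
by rewrite -signr_odd !scaler_sign; case: (odd k); rewrite ?scalerN.
Qed.

Lemma bar_diff_linear i : linear (@bar_diff i).
Proof.
rewrite /bar_diff; move: (erefl (i == n + 1)).
case: {2 3}(i == n + 1) => h a u v.
- by rewrite !lcastD !lcastZ lcastD lcastZ scalerDr scale_sign_comm.
- by rewrite scaler0 addr0.
Qed.

Lemma bar_diff_ne i x : i != n + 1 -> bar_diff x = 0 :> bar_obj (i - 1).
Proof.
move=> hne; rewrite /bar_diff; move: (erefl (i == n + 1)).
by case: {2 3}(i == n + 1) => h //; rewrite h in hne.
Qed.

Lemma bar_diff2 i x : bar_diff (bar_diff (i:=i) x) = 0.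
Proof.
have [e|ne] := eqVneq i (n + 1).
- have ne1 : i - 1 != n + 1.
    by rewrite e addrK -subr_eq0 opprD addrA subrr sub0r oppr_eq0 oner_eq0.
  exact: bar_diff_ne.
- rewrite (bar_diff_ne i x ne).
  have := bar_diff_linear (i - 1) (-1) 0 0.
  by rewrite scaleN1r oppr0 addr0 scaleN1r addNr.
Qed.

Definition bar_shift : complex :=
  Complex bar_obj (@bar_diff) bar_diff_linear bar_diff2.
End Bar.
End Defs.
Arguments chain_map {R X Y} f.

(* Main.v *)
Require Import Defs.
From mathcomp Require Import all_boot all_order all_algebra.
From Stdlib Require Import ProofIrrelevance.
From mathcomp Require Import zify.
Import GRing.Theory.
Local Open Scope ring_scope.
Set Implicit Arguments. Unset Strict Implicit.

Section S.
Variable R : pzRingType.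

Lemma lin0 (U V : lmodType R) (f : U -> V) : linear f -> f 0 = 0.
Proof.
move=> hf; have := hf 1 0 0; rewrite !scale1r addr0.
by move=> /(congr1 (fun v => v - f 0)); rewrite addrK subrr.
Qed.
Lemma linD (U V : lmodType R) (f : U -> V) : linear f -> forall x y, f (x + y) = f x + f y.
Proof. by move=> hf x y; have := hf 1 x y; rewrite !scale1r. Qed.
Lemma linZ (U V : lmodType R) (f : U -> V) : linear f -> forall a x, f (a *: x) = a *: f x.
Proof. by move=> hf a x; have := hf a x 0; rewrite !addr0 (lin0 hf) addr0. Qed.

Definition tr (T : int -> lmodType R) i j (e : i = j) (x : T i) : T j :=
  eq_rect i (fun k => (T k : Type)) x j e.
Arguments tr T {i j} e x.

Lemma tr_lin T i j (e : i = j) : linear (tr T e).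
Proof. by case: j / e. Qed.
Lemma tr0 T i j (e : i = j) : tr T e 0 = 0.
Proof. by case: j / e. Qed.

Lemma lcast0 (A B : lmodType R) (e : A = B) : lcast R A B e 0 = 0.
Proof. by case: B / e. Qed.
Lemma lcastK (A B : lmodType R) (e : A = B) x : lcast R B A (esym e) (lcast R A B e x) = x.
Proof. by case: B / e x. Qed.
Lemma lcastKV (A B : lmodType R) (e : A = B) x : lcast R A B e (lcast R B A (esym e) x) = x.
Proof. by case: B / e x. Qed.
Lemma lcast_pi (A B : lmodType R) (e1 e2 : A = B) x : lcast R A B e1 x = lcast R A B e2 x.
Proof. by rewrite (proof_irrelevance _ e1 e2). Qed.

Variable n : int.
Definition s : R := (-1) ^+ `|n|%N.
Lemma ssK (V : lmodType R) (x : V) : s *: (s *: x) = x.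
Proof. by rewrite scalerA /s -exprD -signr_odd oddD addbb expr0 scale1r. Qed.

Lemma top_ne : n + 1 - 1 != n + 1.
Proof. lia. Qed.
Lemma bot2_ne1 : n + 1 - 1 - 1 != n + 1.
Proof. lia. Qed.
Lemma bot2_ne2 : n + 1 - 1 - 1 != n + 1 - 1.
Proof. lia. Qed.
Lemma pred_inj (i j : int) : i - 1 = j - 1 -> i = j.
Proof. by move/(congr1 (fun k => k + 1)); rewrite !subrK. Qed.

Definition eT (P : lmodType R) : bar_obj R P n (n + 1) = P := bar_obj_top R P n (n + 1) (eqxx _).
Definition eB (P : lmodType R) : bar_obj R P n (n + 1 - 1) = P := bar_obj_bot R P n (n + 1) (eqxx _).

Lemma bar_zero (P : lmodType R) i (x : bar_obj R P n i) :
  i != n + 1 -> i != n + 1 - 1 -> x = 0.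
Proof.
move=> h1 h2.
have e : bar_obj R P n i = zero_mod R.
  by rewrite addrK in h2; rewrite /bar_obj (negbTE h1) /= (negbTE h2).
by rewrite -(lcastK e x) (thinmx0 (lcast R _ _ e x)) lcast0.
Qed.

Lemma bar_diff_top (P : lmodType R) (x : bar_obj R P n (n + 1)) :
  bar_diff R P n (n + 1) x = lcast R _ _ (esym (eB P)) (s *: lcast R _ _ (eT P) x).
Proof.
rewrite /bar_diff; move: (erefl (n + 1 == n + 1)).
case: {2 3}(n + 1 == n + 1) => h; last by rewrite eqxx in h.
by rewrite /eT /eB /s (proof_irrelevance _ h (eqxx (n + 1))).
Qed.

Lemma chain_comp (X Y Z : complex R) (F : forall i, X i -> Y i) (G : forall i, Y i -> Z i) :
  chain_map F -> chain_map G -> chain_map (fun i x => G i (F i x)).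
Proof.
move=> [Fl Fc] [Gl Gc]; split.
  by move=> i a u v; rewrite Fl Gl.
by move=> i x; rewrite Fc Gc.
Qed.

Definition ext (P : lmodType R) (X : complex R) (h : P -> X (n + 1)) (i : int) :
  bar_obj R P n i -> X i :=
  match i =P n + 1 with
  | ReflectT e => fun x =>
      tr X (esym e) (h (lcast R _ _ (eT P) (tr (bar_obj R P n) e x)))
  | ReflectF _ => match i =P n + 1 - 1 with
     | ReflectT e => fun x => tr X (esym e)
         (cdiff R X (n + 1) (h (s *: lcast R _ _ (eB P) (tr (bar_obj R P n) e x))))
     | ReflectF _ => fun _ => 0 end end.

Arguments ext {P X} h i.
Section Ext.
Variables (P : lmodType R) (X : complex R) (h : P -> X (n + 1)).

Lemma ext_top x : ext h (n + 1) x = h (lcast R _ _ (eT P) x).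
Proof. by rewrite /ext; case: eqP => [e|//]; rewrite (eq_axiomK e). Qed.

Lemma ext_bot x : ext h (n + 1 - 1) x =
  cdiff R X (n + 1) (h (s *: lcast R _ _ (eB P) x)).
Proof.
rewrite /ext; case: eqP => [e|_]; first by case/negP: top_ne; apply/eqP.
by case: eqP => [e|//]; rewrite (eq_axiomK e).
Qed.

Lemma ext_zero i x : i != n + 1 -> i != n + 1 - 1 -> ext h i x = 0.
Proof.
move=> h1 h2; rewrite /ext; case: eqP => [e|_]; first by rewrite e eqxx in h1.
by case: eqP => [e|//]; rewrite e eqxx in h2.
Qed.

Hypothesis hl : linear h.

Lemma ext_lin i : linear (ext h i).
Proof.
rewrite /ext; case: eqP => [e|_].
  by subst i => a u v /=; rewrite lcastD lcastZ hl.
case: eqP => [e|_].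
  subst i => a u v /=.
  by rewrite lcastD lcastZ scalerDr /s scale_sign_comm hl (cdiff_linear R X).
by move=> a u v; rewrite scaler0 addr0.
Qed.

Lemma ext_chain : @chain_map R (bar_shift R P n) X (ext h).
Proof.
split; first exact: ext_lin.
move=> i x; have [e|ne1] := eqVneq i (n + 1).
  subst i; rewrite /= ext_bot ext_top bar_diff_top lcastKV ssK //.
have [e|ne2] := eqVneq i (n + 1 - 1).
  subst i; rewrite ext_zero ?bot2_ne1 ?bot2_ne2 // ext_bot cdiff2 //.
rewrite (ext_zero x ne1 ne2) (lin0 (cdiff_linear R X i)) /=.
rewrite (bar_diff_ne R P n i x ne1); exact (lin0 (ext_lin (i:=i - 1))).
Qed.
End Ext.

Lemma bar_unique P (X : complex R) (F1 F2 : forall i, bar_shift R P n i -> X i) :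
  chain_map F1 -> chain_map F2 -> (forall x, F1 (n + 1) x = F2 (n + 1) x) ->
  forall i x, F1 i x = F2 i x.
Proof.
move=> [l1 c1] [l2 c2] htop i x.
have [e|ne1] := eqVneq i (n + 1); first by subst i.
have [e|ne2] := eqVneq i (n + 1 - 1).
  subst i.
  have -> : x = bar_diff R P n (n + 1)
     (lcast R _ _ (esym (eT P)) (s *: lcast R _ _ (eB P) x)).
    by rewrite bar_diff_top lcastKV ssK lcastK.
  by rewrite c1 c2 htop.
by rewrite (bar_zero x ne1 ne2) (lin0 (l1 i)) (lin0 (l2 i)).
Qed.

Lemma disk_proj (Q : lmodType R) : projective_mod R Q -> projective_cx R (bar_shift R Q n).
Proof.
move=> pQ A B g gch gs f fch.
have gch' := gch; have fch' := fch.
move: gch fch => [gl gc] [fl fc].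
have [h [hl hh]] := pQ (A (n + 1)) (B (n + 1)) (g (n + 1)) (gl _) (gs _)
   (fun x => f (n + 1) (lcast R _ _ (esym (eT Q)) x))
   (fun a u v => ltac:(by rewrite /= lcastD lcastZ fl)).
exists (ext h); split; first exact: ext_chain.
apply: (bar_unique (F1 := fun i x => g i (ext h i x))) => //.
  exact: chain_comp (ext_chain hl) gch'.
by move=> x; rewrite ext_top hh lcastK.
Qed.

Definition coext (P : complex R) (B : lmodType R) (f : P (n + 1 - 1) -> B) (i : int) :
  P i -> bar_obj R B n i :=
 match i =P n + 1 with
 | ReflectT e => fun x => tr (bar_obj R B n) (esym e) (lcast R _ _ (esym (eT B))
      (s *: f (tr P (congr1 (fun k => k - 1) e) (cdiff R P i x))))
 | ReflectF _ => match i =P n + 1 - 1 with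
   | ReflectT e => fun x => tr (bar_obj R B n) (esym e) (lcast R _ _ (esym (eB B)) (f (tr P e x)))
   | ReflectF _ => fun _ => 0 end end.

Arguments coext {P B} f i.
Section Coext.
Variables (P : complex R) (B : lmodType R) (f : P (n + 1 - 1) -> B).

Lemma coext_top x : coext f (n + 1) x =
  lcast R _ _ (esym (eT B)) (s *: f (cdiff R P (n + 1) x)).
Proof. by rewrite /coext; case: eqP => [e|//]; rewrite (eq_axiomK e). Qed.

Lemma coext_bot x : coext f (n + 1 - 1) x = lcast R _ _ (esym (eB B)) (f x).
Proof.
rewrite /coext; case: eqP => [e|_]; first by case/negP: top_ne; apply/eqP.
by case: eqP => [e|//]; rewrite (eq_axiomK e).
Qed.

Lemma coext_zero i x : i != n + 1 -> i != n + 1 - 1 -> coext f i x = 0.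
Proof.
move=> h1 h2; rewrite /coext; case: eqP => [e|_]; first by rewrite e eqxx in h1.
by case: eqP => [e|//]; rewrite e eqxx in h2.
Qed.

Hypothesis fl : linear f.

Lemma coext_lin i : linear (coext f i).
Proof.
rewrite /coext; case: eqP => [e|_].
  subst i => a u v /=.
  by rewrite (cdiff_linear R P) fl scalerDr /s scale_sign_comm lcastD lcastZ.
case: eqP => [e|_].
  by subst i => a u v /=; rewrite fl lcastD lcastZ.
by move=> a u v; rewrite scaler0 addr0.
Qed.

Lemma coext_chain : @chain_map R P (bar_shift R B n) (coext f).
Proof.
split; first exact: coext_lin.
move=> i x; have [e|ne1] := eqVneq i (n + 1).
  subst i; rewrite /= coext_bot coext_top bar_diff_top lcastKV ssK //.
have [e|ne2] := eqVneq i (n + 1 - 1).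
  subst i; rewrite coext_zero ?bot2_ne1 ?bot2_ne2 //= bar_diff_ne //; exact: top_ne.
rewrite (coext_zero x ne1 ne2) /= (lin0 (bar_diff_linear R B n i)).
rewrite /coext; case: eqP => [e|_].
  by rewrite cdiff2 tr0 (lin0 fl) scaler0 lcast0 tr0.
case: eqP => [e|//]; by case/negP: ne1; apply/eqP; exact: pred_inj e.
Qed.
End Coext.

Lemma comp_proj (P : complex R) : projective_cx R P -> projective_mod R (P (n + 1 - 1)).
Proof.
move=> pP A B g gl gs f fl.
pose h := fun a => lcast R _ _ (esym (eT B)) (g a).
have hl : linear h by move=> a u v; rewrite /h gl lcastD lcastZ.
pose G := ext (X := bar_shift R B n) h.
have Gbot y : G (n + 1 - 1) y = lcast R _ _ (esym (eB B)) (g (lcast R _ _ (eB A) y)).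
  rewrite /G ext_bot /= bar_diff_top /h lcastKV (linZ gl) ssK //.
have Gs : forall i y, exists x, G i x = y.
  move=> i y; have [e|ne1] := eqVneq i (n + 1).
    subst i; have [a ha] := gs (lcast R _ _ (eT B) y).
    by exists (lcast R _ _ (esym (eT A)) a); rewrite /G ext_top /h lcastKV ha lcastK.
  have [e|ne2] := eqVneq i (n + 1 - 1).
    subst i; have [a ha] := gs (lcast R _ _ (eB B) y).
    by exists (lcast R _ _ (esym (eB A)) a); rewrite Gbot lcastKV ha lcastK.
  exists 0; rewrite (bar_zero y ne1 ne2); exact (lin0 (ext_lin (X := bar_shift R B n) hl (i:=i))).
have [H [[Hl Hc] HG]] := pP (bar_shift R A n) (bar_shift R B n) G (ext_chain (X := bar_shift R B n) hl) Gs (coext f) (coext_chain fl).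
exists (fun x => lcast R _ _ (eB A) (H (n + 1 - 1) x)); split.
  by move=> a u v; rewrite Hl lcastD lcastZ.
move=> x; have := HG (n + 1 - 1) x.
rewrite Gbot coext_bot => /(congr1 (lcast R _ _ (eB B))); rewrite !lcastKV //.
Qed.

End S.

Theorem lemma2p3 (R : pzRingType) (n : int) (N : complex R) (M : lmodType R) :
  subproj_cx R (bar_shift R M n) N <-> subproj_mod R M (N (n + 1)).
Proof.
split.
- move=> H f fl.
  have [P [a [b [pP [al ac] [bl bc] hab]]]] := H (ext (n := n) f) (ext_chain fl).
  exists (P (n + 1)), (fun x => a (n + 1) (lcast R _ _ (esym (eT n M)) x)), (b (n + 1)).
  split.
  + by have := comp_proj (n := n + 1) pP; rewrite addrK.
  + by move=> c u v; rewrite lcastD lcastZ al.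
  + exact: bl.
  + by move=> x; rewrite hab ext_top lcastKV.
- move=> H F Fch; have Fch' := Fch; move: Fch => [Fl Fc].
  have [Q [a [b [pQ al bl hab]]]] :=
    H (fun x => F (n + 1) (lcast R _ _ (esym (eT n M)) x))
      (fun c u v => ltac:(by rewrite /= lcastD lcastZ Fl)).
  have hl : linear (fun x => lcast R _ _ (esym (eT n Q)) (a x)).
    by move=> c u v; rewrite al lcastD lcastZ.
  exists (bar_shift R Q n),
    (ext (n := n) (X := bar_shift R Q n) (fun x => lcast R _ _ (esym (eT n Q)) (a x))),
    (ext (n := n) (X := N) b).
  split.
  + exact: disk_proj.
  + exact: ext_chain.
  + exact: ext_chain.
  + refine (bar_unique (chain_comp (ext_chain (X := bar_shift R Q n) hl) (ext_chain bl)) Fch' _).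
    by move=> x; rewrite /= !ext_top lcastKV hab lcastK.
Qed.
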